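(* Let $M$ be a finite rectangular monoid, $k$ a field which is a splitting field for the maximal subgroups of $M$, $X,Y\in\Lambda(M)$ with $X<Y$, and $e_X<e_Y$ chosen idempotent generators of $X,Y$. Let $A$ be a $k[G_Y\times G_X^{op}]$-module regarded as an $M$-bimodule via $m\cdot a\cdot m'=\rho_Y(m)a\rho_X(m')$. Then $H^1(M,A)\cong\mathrm{Hom}_{k[G_Y\times G_X^{op}]}(V_{X,Y},A)$.
   Context: $E(M)$ idempotents, $m^\omega$ idempotent power; $e<f$ means $ef=e=fe\neq f$. $M$ rectangular: each $\{f\in E(M):MfM=MeM\}$ closed under multiplication. $\Lambda(M)$: ideals $MeM$ ordered by inclusion; $\sigma(m)=Mm^\omega M$; $\sigma(m)\ge X$ iff $X\subseteq\sigma(m)$; $\nabla X=\{m:X\not\subseteq MmM\}$; $\nabla Y\nabla X=\{ab:a\in\nabla Y,b\in\nabla X\}$. $G_X$ = group of units of $e_XMe_X$; $\rho_X(m)=e_Xme_X$ if $\sigma(m)\ge X$, else $0$. Let $\sim$ be the least equivalence relation on $e_YMe_X$ with: $e_Ymne_X\sim e_Yme_Yne_X$ for all $m,n\in M$; $e_Ymne_X\sim e_Yme_Xne_X$ for all $n$ whenever $\sigma(m)\not\ge Y$; $z\sim z'$ for all $z,z'\in\nabla Y\nabla X\cap e_YMe_X$. $W_{X,Y}=k[e_YMe_X]/Z_{X,Y}$, $Z_{X,Y}$ spanned by $\nabla Y\nabla X\cap e_YMe_X$ and differences of $\sim$-related elements; $W_{X,Y}$ is a $G_Y\times G_X^{op}$-module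 by left/right multiplication, and $a\mapsto\rho_X(a)$ induces a well-defined surjective module map $W_{X,Y}\to kG_X$ (with $G_Y$ acting on $kG_X$ through $\rho_X$). $V_{X,Y}$ is its kernel. $H^1(M,A)$: derivations modulo inner derivations $m\mapsto ma-am$. *)

(* Defs.v *)
From HB Require Import structures.
From mathcomp Require Import all_boot all_order all_algebra.
Set Implicit Arguments. Unset Strict Implicit. Unset Printing Implicit Defensive.
Import Order.TTheory GRing.Theory Num.Theory.
Local Open Scope ring_scope.

Record finMonoid := FinMonoid {
  mcar :> finType;
  mmul : mcar -> mcar -> mcar;
  mone : mcar;
  mmulA : associative mmul;
  mmul1m : left_id mone mmul;
  mmulm1 : right_id mone mmul }.
Arguments mmul {_}.
Arguments mone {_}.

Section Monoid.
Variable M : finMonoid.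
Local Notation "x ** y" := (mmul x y) (at level 40, left associativity).

Definition idem (e : M) : bool := e ** e == e.
Definition idem_lt (e f : M) : bool := [&& e ** f == e, f ** e == e & e != f].

Definition mpow (m : M) (n : nat) : M := iter n (mmul m) mone.
Definition omega (m : M) : M :=
  odflt mone [pick x | idem x && [exists n : 'I_#|M|.+1, (0 < (n : nat))%N && (x == mpow m n)]].

Definition ideal (m : M) : {set M} := [set a ** m ** b | a : M, b : M].

Definition rectangular : Prop :=
  forall e, idem e -> forall f f', idem f -> idem f' ->
    ideal f = ideal e -> ideal f' = ideal e ->
    idem (f ** f') && (ideal (f ** f') == ideal e).

(* sigma(m) = M m^omega M ;  sigma(m) >= X  iff  X \subset sigma(m) *)
Definition sigma (m : M) : {set M} := ideal (omega m).

Definition nabla (X : {set M}) : {set M} := [set m | ~~ (X \subset ideal m)].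

Definition inG (e g : M) : bool :=
  (e ** g ** e == g) &&
  [exists h : M, [&& e ** h ** e == h, g ** h == e & h ** g == e]].

Section Split.
Variable k : fieldType.
Definition is_rep (e : M) (n : nat) (rho : M -> 'M[k]_n) : Prop :=
  rho e = 1%:M /\
  forall g h, inG e g -> inG e h -> rho (g ** h) = rho g *m rho h.
Definition rep_irreducible (e : M) (n : nat) (rho : M -> 'M[k]_n) : Prop :=
  (0 < n)%N /\
  forall U : 'M[k]_n, (forall g, inG e g -> (U *m rho g <= U)%MS) ->
    \rank U = 0%N \/ \rank U = n.
Definition rep_abs_irreducible (e : M) (n : nat) (rho : M -> 'M[k]_n) : Prop :=
  forall B : 'M[k]_n, exists c : M -> k, B = \sum_(g | inG e g) c g *: rho g.
Definition splitting_field_for_max_subgroups : Prop :=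
  forall e, idem e -> forall n (rho : M -> 'M[k]_n),
    is_rep e rho -> rep_irreducible e rho -> rep_abs_irreducible e rho.
End Split.

Section Module.
Variables (k : fieldType) (eX eY : M).
Let X := ideal eX.
Let Y := ideal eY.

(* rho_X(m) on basis elements is encoded by the test X \subset sigma m *)
(* k[G_Y x G_X^op]-module structure on A : left G_Y action l, right G_X action r *)
Definition GG_module (A : lmodType k) (l r : M -> {linear A -> A}) : Prop :=
  [/\ forall g h, inG eY g -> inG eY h -> l (g ** h) =1 l g \o l h,
      l eY =1 id,
      forall g h, inG eX g -> inG eX h -> r (g ** h) =1 r h \o r g,
      r eX =1 id &
      forall g h, inG eY g -> inG eX h -> l g \o r h =1 r h \o l g].

(* M-bimodule structure: m . a . m' = rho_Y(m) a rho_X(m') *)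
Definition lactM (A : lmodType k) (l : M -> {linear A -> A}) (m : M) (a : A) : A :=
  if Y \subset sigma m then l (eY ** m ** eY) a else 0.
Definition ractM (A : lmodType k) (r : M -> {linear A -> A}) (a : A) (m : M) : A :=
  if X \subset sigma m then r (eX ** m ** eX) a else 0.

Definition derivation (A : lmodType k) (l r : M -> {linear A -> A}) (d : M -> A) : Prop :=
  forall m n, d (m ** n) = lactM l m (d n) + ractM r (d m) n.
Definition inner_derivation (A : lmodType k) (l r : M -> {linear A -> A}) (d : M -> A) : Prop :=
  exists a : A, forall m, d m = lactM l m a - ractM r a m.

(* the monoid algebra k[M], as functions M -> k *)
Definition kM := {ffun M -> k^o}.
Definition delta (s : M) : kM := [ffun t => (t == s)%:R].
Definition bimul (g h : M) (v : kM) : kM := [ffun t => \sum_(s | g ** s ** h == t) v s].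

Definition SYX : {set M} := [set eY ** m ** eX | m : M].
Definition kS : {vspace kM} := << [seq delta s | s <- enum SYX] >>%VS.

Definition NN (z : M) : bool :=
  (z \in SYX) && [exists a, exists b, [&& a \in nabla Y, b \in nabla X & z == a ** b]].

Definition simgen (z z' : M) : bool :=
  [exists m, exists n,
     (z == eY ** (m ** n) ** eX) &&
     ((z' == eY ** m ** eY ** n ** eX) ||
      (~~ (Y \subset sigma m)) && (z' == eY ** m ** eX ** n ** eX))]
  || (NN z && NN z').
Definition sim (z z' : M) : bool :=
  [&& z \in SYX, z' \in SYX & connect (fun x y => simgen x y || simgen y x) z z'].

Definition ZYX : {vspace kM} :=
  (<< [seq delta z | z <- enum M & NN z] >> +
   << [seq delta p.1 - delta p.2 | p <- [seq (x, y) | x <- enum M, y <- enum M] & sim p.1 p.2] >>)%VS.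

Definition rhoXlin (v : kM) : kM :=
  \sum_(s in SYX | X \subset sigma s) v s *: delta (eX ** s ** eX).

(* preimage in k[e_Y M e_X] of V_{X,Y} = ker (W_{X,Y} -> k G_X); V = KYX / ZYX *)
Definition KYX : {vspace kM} := (kS :&: lker (linfun rhoXlin))%VS.

(* Hom_{k[G_Y x G_X^op]}(V_{X,Y}, A), with V = KYX / ZYX :
   k-linear maps KYX -> A vanishing on ZYX and equivariant. *)
Definition homV (A : lmodType k) (l r : M -> {linear A -> A})
    (f : subvs_of KYX -> A) : Prop :=
  [/\ forall (c : k) u v, f (c *: u + v) = c *: f u + f v,
      forall v, vsval v \in ZYX -> f v = 0 &
      forall g h (v w : subvs_of KYX), inG eY g -> inG eX h ->
        vsval w = bimul g h (vsval v) -> f w = l g (r h (f v))].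
End Module.
End Monoid.

(* Main.v *)
Require Import Defs.
From HB Require Import structures.
From mathcomp Require Import all_boot all_order all_algebra.
From mathcomp Require Import zify.
Set Implicit Arguments. Unset Strict Implicit. Unset Printing Implicit Defensive.

Section MonoidTheory.
Variable M : finMonoid.
Local Notation "x ** y" := (mmul x y) (at level 40, left associativity).

Lemma mA (x y z : M) : x ** (y ** z) = x ** y ** z.
Proof. exact: mmulA. Qed.
Lemma m1 (x : M) : mone ** x = x.
Proof. exact: mmul1m. Qed.
Lemma m1r (x : M) : x ** mone = x.
Proof. exact: mmulm1. Qed.

Lemma idealP (x y : M) : reflect (exists a b, y = a ** x ** b) (y \in ideal x).
Proof.
apply: (iffP imset2P) => [[a b ha hb e]|[a [b ->]]]; first by exists a, b.
by exists a b.
Qed.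

Lemma idealM (a x b : M) : a ** x ** b \in ideal x.
Proof. by apply/idealP; exists a, b. Qed.

Lemma ideal_refl (x : M) : x \in ideal x.
Proof. by apply/idealP; exists mone, mone; rewrite m1 m1r. Qed.

Lemma ideal_trans (x y z : M) : y \in ideal x -> z \in ideal y -> z \in ideal x.
Proof.
move=> /idealP[a [b ->]] /idealP[c [d ->]].
by apply/idealP; exists (c ** a), (b ** d); rewrite !mA.
Qed.

Lemma ideal_sub (x y : M) : y \in ideal x -> ideal y \subset ideal x.
Proof. by move=> yx; apply/subsetP => z; apply: ideal_trans. Qed.

Lemma ideal_eq (x y : M) : y \in ideal x -> x \in ideal y -> ideal x = ideal y.
Proof. by move=> yx xy; apply/eqP; rewrite eqEsubset !ideal_sub. Qed.

Lemma mpowS (m : M) n : mpow m n.+1 = m ** mpow m n.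
Proof. by []. Qed.

Lemma mpowD (m : M) a b : mpow m (a + b) = mpow m a ** mpow m b.
Proof. by elim: a => [|a IH]; rewrite ?m1 // addSn !mpowS IH mA. Qed.

Lemma mpowS' (m : M) n : mpow m n.+1 = mpow m n ** m.
Proof. by rewrite -addn1 mpowD /= m1r. Qed.

Lemma omega_ex (m : M) : exists2 n, (0 < n)%N & idem (mpow m n) && (n <= #|M|)%N.
Proof.
set N := #|M|.
have: ~~ injectiveb (fun i : 'I_N.+1 => mpow m i.+1).
  apply/injectiveP => inj; have := leq_card _ inj.
  by rewrite card_ord ltnn.
case/injectivePn => i [j] ij eq.
wlog lt: i j ij eq / (i < j)%N.
  move=> W; case: (ltngtP i j) => [h|h|h]; first exact: (W i j).
  - by apply: (W j i); rewrite // eq_sym.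
  - by move: ij; rewrite -val_eqE /= h eqxx.
set a := i.+1; set p := (j - i)%N.
have p0 : (0 < p)%N by rewrite subn_gt0.
have per1 : forall t, (a <= t)%N -> mpow m (t + p) = mpow m t.
  move=> t at_; rewrite -(subnK at_) -addnA mpowD.
  have -> : (a + p = j.+1)%N by rewrite /a /p; lia.
  by rewrite -eq -mpowD.
have per : forall c t, (a <= t)%N -> mpow m (t + c * p) = mpow m t.
  elim=> [|c IH] t at_; first by rewrite mul0n addn0.
  by rewrite mulSn addnA IH ?per1 //; lia.
have [c [ac cN]] : exists c, (a <= c * p)%N /\ (c * p <= N)%N.
  have jN : (j < N.+1)%N := ltn_ord j.
  have dq := divn_eq a p; have rp := ltn_pmod a p0.
  case r0: (a %% p == 0%N).
    exists (a %/ p); move/eqP: r0 => r0; rewrite r0 addn0 in dq.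
    by rewrite -dq; split => //; rewrite /a; lia.
  exists (a %/ p).+1; rewrite mulSn; move/negbT: r0; rewrite -lt0n => r0.
  split; first lia.
  by rewrite /a /p in dq rp r0 *; lia.
exists (c * p)%N; first by lia.
rewrite cN andbT /idem -mpowD per //.
Qed.

Lemma omegaP (m : M) : exists2 n, (0 < n)%N & omega m = mpow m n /\ idem (omega m).
Proof.
rewrite /omega; case: pickP => [x /andP[ix /existsP[n /andP[n0 /eqP ex]]]|none].
  by exists n => //; split.
exfalso; have [n n0 /andP[idn nN]] := omega_ex m.
have := none (mpow m n); rewrite idn /= => /negbT/negP; apply.
apply/existsP; exists (Ordinal (nN : (n < #|M|.+1)%N)) => /=.
by rewrite n0 eqxx.
Qed.


Lemma mpow0 (m : M) : mpow m 0 = mone.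
Proof. by []. Qed.

Lemma midl2 (x a b d : M) : a ** b = d -> x ** a ** b = x ** d.
Proof. by move=> <-; rewrite !mA. Qed.
Lemma midl3 (x a b c d : M) : a ** b ** c = d -> x ** a ** b ** c = x ** d.
Proof. by move=> <-; rewrite !mA. Qed.

Lemma stabR (e u y : M) : u = e ** y -> e \in ideal u -> exists z, e = u ** z.
Proof.
move=> -> /idealP[a [b he]].
have he' : e = a ** e ** (y ** b) by rewrite {1}he !mA.
have it : forall n, e = mpow a n ** e ** mpow (y ** b) n.
  elim=> [|n IH]; first by rewrite !mpow0 m1 m1r.
  by rewrite {1}IH {1}he' mpowS' mpowS !mA.
have [kk kk0 [ok idk]] := omegaP (y ** b).
have ef : e ** omega (y ** b) = e.
  rewrite {1}(it kk) -ok -[_ ** omega _ ** omega _]mA (eqP idk).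
  by rewrite ok -(it kk).
case: kk kk0 ok {it} => // kk _ ok.
exists (b ** mpow (y ** b) kk).
by rewrite -{1}ef ok mpowS !mA.
Qed.

Lemma stabL (e u y : M) : u = y ** e -> e \in ideal u -> exists z, e = z ** u.
Proof.
move=> -> /idealP[a [b he]].
have he' : e = a ** y ** e ** b by rewrite {1}he !mA.
have it : forall n, e = mpow (a ** y) n ** e ** mpow b n.
  elim=> [|n IH]; first by rewrite !mpow0 m1 m1r.
  by rewrite {1}IH {1}he' mpowS' mpowS !mA.
have [kk kk0 [ok idk]] := omegaP (a ** y).
have fe : omega (a ** y) ** e = e.
  rewrite {1}(it kk) -ok !mA (eqP idk).
  by rewrite ok -(it kk).
case: kk kk0 ok {it} => // kk _ ok.
exists (mpow (a ** y) kk ** a).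
by rewrite -{1}fe ok mpowS' !mA.
Qed.

Lemma inG_of (e u : M) : idem e -> e ** u ** e = u -> e \in ideal u -> inG e u.
Proof.
move=> ie ueq eu.
have mee x : x ** e ** e = x ** e by rewrite -mA (eqP ie).
have ue : u ** e = u by rewrite -ueq -mA (eqP ie).
have eu' : e ** u = u by rewrite -ueq !mA (eqP ie).
have [z ez] : exists z, e = u ** z.
  by apply: (stabR (y := u ** e)) eu; rewrite ue eu'.
have [z' ez'] : exists z, e = z ** u.
  by apply: (stabL (y := e ** u)) eu; rewrite ueq.
apply/andP; split; first exact/eqP.
have ez_ : z' ** e = e ** z.
  have : z' ** (u ** z) = e ** z by rewrite mA -ez'.
  by rewrite -ez.
apply/existsP; exists (e ** z ** e); apply/and3P; split.
- by rewrite !mA (eqP ie) mee.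
- by rewrite !mA ue -ez (eqP ie).
- by rewrite -ez_ mee -mA eu' -ez'.
Qed.

Lemma inGP (e g : M) : idem e -> inG e g ->
  [/\ e ** g = g, g ** e = g &
      exists h, [/\ e ** h = h, h ** e = h, g ** h = e & h ** g = e]].
Proof.
move=> ie /andP[/eqP geq /existsP[h /and3P[/eqP heq /eqP gh /eqP hg]]].
split.
- by rewrite -geq !mA (eqP ie).
- by rewrite -geq -mA (eqP ie).
- exists h; split => //.
  + by rewrite -heq !mA (eqP ie).
  + by rewrite -heq -mA (eqP ie).
Qed.

Lemma inG_idem (e g : M) : idem e -> inG e g -> idem g -> g = e.
Proof.
move=> ie gG ig; have [_ ge [h [_ _ gh _]]] := inGP ie gG.
transitivity (g ** e); first by rewrite ge.
by rewrite -{1}gh mA (eqP ig) gh.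
Qed.

Lemma inG_ideal (e g : M) : inG e g -> e \in ideal g.
Proof.
case/andP=> _ /existsP[h /and3P[_ /eqP gh _]].
by apply/idealP; exists mone, h; rewrite m1 gh.
Qed.

Lemma inG_e (e : M) : idem e -> inG e e.
Proof.
move=> ie; apply/andP; split; first by rewrite !(eqP ie).
by apply/existsP; exists e; rewrite !(eqP ie) eqxx.
Qed.

Lemma inGM (e g g' : M) : idem e -> inG e g -> inG e g' -> inG e (g ** g').
Proof.
move=> ie gG gG'.
have [eg ge [h [eh he gh hg]]] := inGP ie gG.
have [eg' ge' [h' [eh' he' gh' hg']]] := inGP ie gG'.
apply/andP; split; first by rewrite mA eg -mA ge'.
apply/existsP; exists (h' ** h); apply/and3P; split.
- by rewrite mA eh' -mA he.
- by rewrite !mA -(mA g g' h') gh' ge gh.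
- by rewrite !mA -(mA h' h g) hg he' hg'.
Qed.

Lemma eme_stable (e x : M) : idem e -> e ** (e ** x ** e) ** e = e ** x ** e.
Proof. by move=> ie; rewrite !mA (eqP ie) (midl2 _ (eqP ie)). Qed.

Definition good (e m : M) := inG e (e ** m ** e).

Variable rect : rectangular M.

Lemma rectM (e f f' : M) : idem e -> idem f -> idem f' ->
  ideal f = ideal e -> ideal f' = ideal e ->
  idem (f ** f') /\ ideal (f ** f') = ideal e.
Proof.
move=> ie if1 if2 j1 j2.
by have /andP[i /eqP j] := rect ie if1 if2 j1 j2.
Qed.

Lemma band_aba (e a b : M) : idem e -> idem a -> idem b ->
  ideal a = ideal e -> ideal b = ideal e -> a ** b ** a = a.
Proof.
move=> ie ia ib ja jb.
have [iab jab] := rectM ie ia ib ja jb.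
have [iaba jaba] := rectM ie iab ia jab ja.
apply: (inG_idem ia _ iaba); apply: inG_of => //.
  by rewrite !mA (eqP ia) (midl2 _ (eqP ia)).
by rewrite jaba -ja ideal_refl.
Qed.

Lemma band_abc (e a b c : M) : idem e -> idem a -> idem b -> idem c ->
  ideal a = ideal e -> ideal b = ideal e -> ideal c = ideal e ->
  a ** b ** c = a ** c.
Proof.
move=> ie ia ib ic ja jb jc.
have [iab jab] := rectM ie ia ib ja jb.
have H : a ** (c ** (a ** b) ** c) = a ** c by rewrite (band_aba ie ic iab jc jab).
by rewrite -H !mA (band_aba ie ia ic ja jc).
Qed.

Lemma good_mul (e m n : M) : idem e -> good e m -> good e n ->
  e ** (m ** n) ** e = (e ** m ** e) ** (e ** n ** e) /\ good e (m ** n).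
Proof.
move=> ie gm gn.
have [_ _ [hm [ehm hme gmhm hmgm]]] := inGP ie gm.
have [_ _ [hn [ehn hne gnhn hngn]]] := inGP ie gn.
move: hmgm hngn; rewrite !mA hme hne => hmgm hngn.
have hmh : hm ** m ** hm = hm by rewrite -{2}ehm mA hmgm ehm.
have hnh : hn ** n ** hn = hn by rewrite -{2}ehn mA hngn ehn.
set g := hm ** m.
have ig : idem g by rewrite /idem /g mA hmh.
have emh : e ** m ** hm = e by rewrite -ehm mA gmhm.
have emg : e ** m ** g = e ** m by rewrite /g mA emh.
have ge : g ** e = e by rewrite /g hmgm.
have jg : ideal g = ideal e.
  apply: ideal_eq; first by apply/idealP; exists mone, e; rewrite m1 ge.
  by apply/idealP; exists mone, (hm ** m); rewrite m1 mA ehm.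
set fn := n ** hn.
have ifn : idem fn by rewrite /idem /fn mA (midl3 _ hnh).
have fngn : fn ** (e ** n ** e) = n ** e.
  by rewrite /fn !mA (midl2 _ hne) (midl3 _ hngn).
have jfn : ideal fn = ideal e.
  apply: ideal_eq.
    apply/idealP; exists e, mone; rewrite m1r /fn mA -ehn mA.
    by rewrite gnhn.
  by apply/idealP; exists n, hn; rewrite /fn -mA ehn.
have band := band_abc ie ig ie ifn jg erefl jfn.
have L1 : e ** m ** n ** e = e ** m ** g ** fn ** (e ** n ** e).
  by apply/esym; rewrite -mA fngn emg mA.
have R1 : (e ** m ** e) ** (e ** n ** e) = e ** m ** g ** e ** fn ** (e ** n ** e).
  apply/esym; rewrite -mA fngn emg.
  by rewrite !mA (midl2 _ (eqP ie)).
have eq : e ** (m ** n) ** e = (e ** m ** e) ** (e ** n ** e).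
  by rewrite (mA e m n) L1 R1 (midl3 _ band) !mA.
split; first by move: eq; rewrite !mA.
rewrite /good eq; exact: inGM.
Qed.

Lemma good_split (e m n : M) : idem e -> good e (m ** n) -> good e m /\ good e n.
Proof.
move=> ie gmn; have eu := inG_ideal gmn.
split.
  have [z ez] : exists z, e = e ** (m ** n) ** e ** z.
    by apply: (stabR (y := m ** n ** e)) eu; rewrite !mA.
  have [z0 e0] : exists z0, e = e ** m ** z0.
    by exists (n ** e ** z); rewrite {1}ez !mA.
  set q := z0 ** e ** m.
  have iq : idem q.
    by rewrite /idem /q !mA (midl3 _ (esym e0)) (midl2 _ (eqP ie)).
  have jq : ideal q = ideal e.
    apply: ideal_eq; first by apply/idealP; exists (e ** m), z0; rewrite /q !mA -e0 (eqP ie) -e0.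
    by rewrite /q idealM.
  have B := band_aba ie ie iq erefl jq.
  apply: inG_of ie (eme_stable _ ie) _.
  apply/idealP; exists (e ** z0), mone; rewrite m1r !mA.
  by rewrite -[X in X = _]B /q !mA.
have [z ez] : exists z, e = z ** (e ** (m ** n) ** e).
  by apply: (stabL (y := e ** m ** n)) eu; rewrite !mA.
have [z1 e1] : exists z1, e = z1 ** n ** e.
  by exists (z ** e ** m); rewrite {1}ez !mA.
set q := n ** e ** z1.
have iq : idem q.
  by rewrite /idem /q !mA (midl3 _ (esym e1)) (midl2 _ (eqP ie)).
have jq : ideal q = ideal e.
  apply: ideal_eq; first by apply/idealP; exists z1, (n ** e); rewrite /q !mA (midl3 _ (esym e1)) (midl2 _ (eqP ie)) -e1.
  by rewrite /q idealM.
have B := band_aba ie ie iq erefl jq.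
apply: inG_of ie (eme_stable _ ie) _.
apply/idealP; exists mone, (z1 ** e); rewrite m1 !mA.
by rewrite -[X in X = _]B /q !mA.
Qed.

Lemma good_idem_above (e f : M) : idem e -> idem f -> e \in ideal f -> e ** f ** e = e.
Proof.
move=> ie iff /idealP[a [b he]].
have [e' [ie' je' fe']] : exists e', [/\ idem e', ideal e' = ideal e & f ** e' = e'].
  exists (f ** b ** e ** a ** f); split.
  - rewrite /idem !mA (midl2 _ (eqP iff)) (midl3 _ (esym he)).
    by rewrite !(midl2 _ (eqP ie)).
  - apply: ideal_eq; last by apply/idealP; exists (f ** b), (a ** f); rewrite !mA.
    apply/idealP; exists a, b; rewrite !mA -he (eqP ie).
    by rewrite (midl3 _ (esym he)) (eqP ie).
  - by rewrite !mA (eqP iff).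
have e'e' := band_aba ie ie' ie je' erefl.
set q := e' ** e ** f.
have iq : idem q by rewrite /idem /q !mA (midl2 _ fe') e'e'.
have jq : ideal q = ideal e.
  apply: ideal_eq; last by rewrite /q idealM.
  apply: (ideal_trans (y := e')); last by rewrite je' ideal_refl.
  by apply/idealP; exists mone, e'; rewrite m1 /q (midl2 _ fe') e'e'.
have B := band_aba ie ie iq erefl jq.
by rewrite /q !mA (band_aba ie ie ie' erefl je') in B.
Qed.

Lemma sigma_good (e m : M) : idem e -> (ideal e \subset sigma m) = good e m.
Proof.
move=> ie; have [kk kk0 [ok io]] := omegaP m.
apply/idP/idP.
  move=> sub; have eo : e \in ideal (omega m) := subsetP sub e (ideal_refl e).
  have gw : good e (omega m) by rewrite /good (good_idem_above ie io eo) inG_e.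
  move: gw; rewrite ok; case: kk kk0 {ok} => // kk _.
  by rewrite mpowS => /(good_split ie) [].
move=> gm.
have gp : forall n, good e (mpow m n).
  elim=> [|n IH]; first by rewrite /good mpow0 m1r (eqP ie) inG_e.
  by rewrite mpowS; have [] := good_mul ie gm IH.
apply: ideal_sub; apply: (ideal_trans (y := e ** omega m ** e)); first exact: idealM.
by apply: inG_ideal; rewrite ok; apply: gp.
Qed.

End MonoidTheory.

Import GRing.Theory.
Local Open Scope ring_scope.

Lemma rhoXlin_is_linear (M : finMonoid) (k : fieldType) (eX eY : M) :
  linear (rhoXlin (k := k) eX eY).
Proof.
move=> c u w; rewrite /rhoXlin scaler_sumr -big_split /=; apply: eq_bigr => s _.
by rewrite !ffunE scalerDl scalerA.
Qed.

HB.instance Definition _ (M : finMonoid) (k : fieldType) (eX eY : M) :=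
  GRing.isLinear.Build k (kM M k) (kM M k) *:%R (rhoXlin eX eY) (rhoXlin_is_linear eX eY).

Lemma span_vanish (K : fieldType) (V : vectType K) (B : lmodType K) (Tf : V -> B) (Xs : seq V) :
  (forall c u w, Tf (c *: u + w) = c *: Tf u + Tf w) ->
  (forall x, x \in Xs -> Tf x = 0) -> forall w, w \in <<Xs>>%VS -> Tf w = 0.
Proof.
move=> lin h0 w /(coord_span (X := in_tuple Xs)) ->.
have T0 : Tf 0 = 0.
  have := lin 1 0 0; rewrite !scale1r addr0 => h.
  by apply: (addrI (Tf 0)); rewrite addr0 -h.
elim/big_rec: _ => // i x _ IH.
rewrite lin IH h0 ?scaler0 ?addr0 //.
by rewrite mem_nth // size_tuple.
Qed.

Opaque sigma.

Section Main.
Variables (M : finMonoid) (k : fieldType) (eX eY : M) (A : lmodType k)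
  (l r : M -> {linear A -> A}).
Hypotheses (rect : rectangular M) (iX : idem eX) (iY : idem eY)
  (hlt : idem_lt eX eY) (hpr : ideal eX \proper ideal eY)
  (GG : GG_module eX eY l r).
Local Notation "x ** y" := (mmul x y) (at level 40, left associativity).
Local Notation L := (lactM eY l).
Local Notation R := (ractM eX r).
Local Notation gX m := (ideal eX \subset sigma m).
Local Notation gY m := (ideal eY \subset sigma m).
Local Notation SYX := (SYX eX eY).

Lemma XY : eX ** eY = eX. Proof. by case/and3P: hlt => /eqP. Qed.
Lemma YX : eY ** eX = eX. Proof. by case/and3P: hlt => _ /eqP. Qed.

Lemma goodM (e m n : M) : idem e -> good e (m ** n) = good e m && good e n.
Proof.
move=> ie; apply/idP/andP => [/(good_split rect ie)[] //|[gm gn]].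
by have [] := good_mul rect ie gm gn.
Qed.

Lemma gXM (m n : M) : gX (m ** n) = gX m && gX n.
Proof. by rewrite !sigma_good // goodM. Qed.
Lemma gYM (m n : M) : gY (m ** n) = gY m && gY n.
Proof. by rewrite !sigma_good // goodM. Qed.

Lemma gY_gX (m : M) : gY m -> gX m.
Proof. by apply: subset_trans; apply: proper_sub. Qed.

Lemma notgY_X (x : M) : x \in ideal eX -> ~~ gY x.
Proof.
move=> xX; apply/negP; rewrite sigma_good // => /inG_ideal h.
have : eY \in ideal eX.
  by apply: ideal_trans xX (ideal_trans (idealM _ _ _) h).
move/ideal_sub => sub; move: hpr; rewrite properE => /andP[_].
by rewrite sub.
Qed.

Lemma gY_eY : gY eY.
Proof. by rewrite sigma_good // /good !(eqP iY) inG_e. Qed.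
Lemma gX_eX : gX eX.
Proof. by rewrite sigma_good // /good !(eqP iX) inG_e. Qed.
Lemma gX_eY : gX eY.
Proof. by rewrite sigma_good // /good XY !(eqP iX) inG_e. Qed.

Lemma G1 (g h : M) : inG eY g -> inG eY h -> l (g ** h) =1 l g \o l h.
Proof. by case: GG => G _ _ _ _; apply: G. Qed.
Lemma G2 : l eY =1 id. Proof. by case: GG. Qed.
Lemma G3 (g h : M) : inG eX g -> inG eX h -> r (g ** h) =1 r h \o r g.
Proof. by case: GG => _ _ G _ _; apply: G. Qed.
Lemma G4 : r eX =1 id. Proof. by case: GG. Qed.
Lemma G5 (g h : M) : inG eY g -> inG eX h -> l g \o r h =1 r h \o l g.
Proof. by case: GG => _ _ _ _ G; apply: G. Qed.

Lemma L0 (m : M) (a : A) : ~~ gY m -> L m a = 0.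
Proof. by rewrite /lactM => /negbTE ->. Qed.
Lemma R0 (m : M) (a : A) : ~~ gX m -> R a m = 0.
Proof. by rewrite /ractM => /negbTE ->. Qed.

Lemma LM (m n : M) (a : A) : L (m ** n) a = L m (L n a).
Proof.
rewrite /lactM gYM; case gm: (gY m); case gn: (gY n); rewrite /= ?linear0 //.
move: gm gn; rewrite !sigma_good // => gm gn.
by have [-> _] := good_mul rect iY gm gn; rewrite G1.
Qed.

Lemma RM (m n : M) (a : A) : R a (m ** n) = R (R a m) n.
Proof.
rewrite /ractM gXM; case gm: (gX m); case gn: (gX n); rewrite /= ?linear0 //.
move: gm gn; rewrite !sigma_good // => gm gn.
by have [-> _] := good_mul rect iX gm gn; rewrite G3.
Qed.

Lemma LR (m n : M) (a : A) : L m (R a n) = R (L m a) n.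
Proof.
rewrite /lactM /ractM; case gm: (gY m); case gn: (gX n); rewrite /= ?linear0 //.
move: gm gn; rewrite !sigma_good // => gm gn.
by have := G5 gm gn a.
Qed.

Lemma LeY (a : A) : L eY a = a.
Proof. by rewrite /lactM gY_eY !(eqP iY) G2. Qed.
Lemma ReX (a : A) : R a eX = a.
Proof. by rewrite /ractM gX_eX !(eqP iX) G4. Qed.
Lemma ReY (a : A) : R a eY = a.
Proof. by rewrite /ractM gX_eY XY !(eqP iX) G4. Qed.

Lemma SYX_P (s : M) : reflect (exists m, s = eY ** m ** eX) (s \in SYX).
Proof.
by apply: (iffP imsetP) => [[m _ ->]|[m ->]]; exists m.
Qed.
Lemma SYX_in (m : M) : eY ** m ** eX \in SYX.
Proof. by apply/SYX_P; exists m. Qed.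
Lemma SYX_fix (s : M) : s \in SYX -> [/\ eY ** s = s, s ** eX = s & eY ** s ** eX = s].
Proof.
case/SYX_P => m ->.
have h1 : eY ** (eY ** m ** eX) = eY ** m ** eX by rewrite !mA (eqP iY).
have h2 : eY ** m ** eX ** eX = eY ** m ** eX by rewrite -mA (eqP iX).
split; [exact: h1 | exact: h2 | by rewrite !mA (eqP iY) -mA (eqP iX)].
Qed.
Lemma SYX_X (s : M) : s \in SYX -> s \in ideal eX.
Proof. by case/SYX_P => m ->; apply/idealP; exists (eY ** m), mone; rewrite m1r. Qed.
Lemma SYX_ngY (s : M) : s \in SYX -> ~~ gY s.
Proof. by move/SYX_X/notgY_X. Qed.

Lemma L_0 (m : M) : L m 0 = 0.
Proof. by rewrite /lactM; case: ifP; rewrite ?linear0. Qed.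
Lemma R_0 (m : M) : R 0 m = 0.
Proof. by rewrite /ractM; case: ifP; rewrite ?linear0. Qed.

Lemma nabla_not (e a : M) : idem e -> a \in nabla (ideal e) -> ~~ (ideal e \subset sigma a).
Proof.
move=> ie; rewrite inE => /negP na; apply/negP; rewrite sigma_good // => /inG_ideal h.
by apply: na; apply: ideal_sub; apply: ideal_trans (idealM _ _ _) h.
Qed.

Section Deriv.
Variable d : M -> A.
Hypothesis hd : derivation eX eY l r d.

Lemma d_eY : d eY = 0.
Proof.
have := hd eY eY; rewrite (eqP iY) LeY ReY => h.
by apply: (addrI (d eY)); rewrite addr0 -h.
Qed.

Lemma d_eYl (q : M) : d (eY ** q) = d q.
Proof. by rewrite hd LeY d_eY R_0 addr0. Qed.

Lemma d_NN z : NN eX eY z -> d z = 0.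
Proof.
case/andP=> _ /existsP[a /existsP[b /and3P[na nb /eqP ->]]].
by rewrite hd L0 ?R0 ?addr0 // (nabla_not _ na, nabla_not _ nb).
Qed.

Lemma d_simgen z z' : simgen eX eY z z' -> d z = d z'.
Proof.
case/orP => [/existsP[m /existsP[n /andP[/eqP -> /orP[/eqP ->|/andP[gm /eqP ->]]]]]|/andP[h1 h2]].
- rewrite (_ : eY ** (m ** n) ** eX = (eY ** m) ** (n ** eX)); last by rewrite !mA.
  rewrite (_ : eY ** m ** eY ** n ** eX = (eY ** m) ** (eY ** (n ** eX))); last by rewrite !mA.
  by rewrite (hd (eY ** m) (n ** eX)) (hd (eY ** m) (eY ** (n ** eX))) (d_eYl (n ** eX)) (RM eY (n ** eX)) ReY.
- rewrite (_ : eY ** (m ** n) ** eX = (eY ** m) ** (n ** eX)); last by rewrite !mA.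
  rewrite (_ : eY ** m ** eX ** n ** eX = (eY ** m) ** (eX ** (n ** eX))); last by rewrite !mA.
  rewrite (hd (eY ** m) (n ** eX)) (hd (eY ** m) (eX ** (n ** eX))) !LM !(L0 _ gm) !L_0.
  by rewrite !add0r (RM eX (n ** eX)) ReX.
- by rewrite !d_NN.
Qed.

Lemma d_sim z z' : sim eX eY z z' -> d z = d z'.
Proof.
case/and3P=> _ _ /connectP[p pth ->] {z'}.
elim: p z pth => [//|y p IH] z /= /andP[/orP[h|h] pth].
  by rewrite (d_simgen h) IH.
by rewrite -(d_simgen h) IH.
Qed.

Definition T (v : kM M k) : A := \sum_(s in SYX) v s *: d s.

Lemma T_lin c u w : T (c *: u + w) = c *: T u + T w.
Proof.
rewrite /T scaler_sumr -big_split; apply: eq_bigr => s _.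
by rewrite !ffunE scalerDl scalerA.
Qed.

Lemma T_D u w : T (u + w) = T u + T w.
Proof. by have := T_lin 1 u w; rewrite !scale1r. Qed.

Lemma T_B u w : T (u - w) = T u - T w.
Proof.
have := T_lin (-1) w u; rewrite scaleN1r addrC => ->.
by rewrite scaleN1r addrC.
Qed.

Lemma T_delta z : T (delta k z) = if z \in SYX then d z else 0.
Proof.
rewrite /T; case: ifP => zS.
  rewrite (bigD1 z) //= big1 => [|s /andP[_ sz]].
    by rewrite ffunE eqxx scale1r addr0.
  by rewrite ffunE (negbTE sz) scale0r.
rewrite big1 // => s sS; rewrite ffunE; case: eqP => [sz|]; last by rewrite scale0r.
by rewrite -sz sS in zS.
Qed.

Lemma T_Z w : w \in ZYX k eX eY -> T w = 0.
Proof.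
case/memv_addP=> u uN [v vS ->].
rewrite T_D (span_vanish T_lin _ uN) ?(span_vanish T_lin _ vS) ?addr0 //.
  move=> x /mapP[[a b] /=]; rewrite mem_filter => /andP[sab _] ->.
  by rewrite T_B !T_delta; case/and3P: (sab) => -> -> _; rewrite (d_sim sab) subrr.
move=> x /mapP[z]; rewrite mem_filter => /andP[nz _] ->.
by rewrite T_delta; case/andP: (nz) => -> _; rewrite d_NN.
Qed.

End Deriv.

Local Notation kS := (kS k eX eY).
Local Notation KYX := (KYX k eX eY).
Local Notation ZYX := (ZYX k eX eY).
Local Notation rho := (rhoXlin (k := k) eX eY).
Local Notation dl := (delta k).

Lemma kS_supp (v : kM M k) (s : M) : v \in kS -> s \notin SYX -> v s = 0.
Proof.
move=> vS sS.
apply: (span_vanish (B := k^o) (Tf := fun v : kM M k => v s) _ _ vS).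
  by move=> c u w; rewrite !ffunE.
move=> x /mapP[z]; rewrite mem_enum => zS ->; rewrite ffunE.
by case: eqP => // sz; rewrite sz zS in sS.
Qed.

Lemma delta_kS z : z \in SYX -> dl z \in kS.
Proof. by move=> zS; apply: memv_span; apply: map_f; rewrite mem_enum. Qed.

Lemma rho_delta z :
  rho (dl z) = if (z \in SYX) && gX z then dl (eX ** z ** eX) else 0.
Proof.
rewrite /rhoXlin; case: ifP => zS.
  rewrite (bigD1 z) //= big1 => [|s /andP[_ sz]].
    by rewrite ffunE eqxx scale1r addr0.
  by rewrite ffunE (negbTE sz) scale0r.
rewrite big1 // => s /andP[sS gs]; rewrite ffunE; case: eqP => [sz|]; last by rewrite scale0r.
by rewrite -sz sS gs in zS.
Qed.

Lemma KYXP v : (v \in KYX) = (v \in kS) && (rho v == 0).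
Proof. by rewrite /Defs.KYX memv_cap memv_ker lfunE. Qed.

Lemma SYX_char s : (s \in SYX) = (eY ** s ** eX == s).
Proof.
apply/idP/eqP => [/SYX_fix[] //|<-]; exact: SYX_in.
Qed.

Lemma rhoSYX z : z \in SYX -> eX ** z ** eX \in SYX.
Proof.
by move=> zS; rewrite SYX_char !mA YX -mA (eqP iX).
Qed.

Lemma gXrho z : gX (eX ** z ** eX) = gX z.
Proof. by rewrite gXM gXM gX_eX /= andbT. Qed.

Lemma rho_idem z : eX ** (eX ** z ** eX) ** eX = eX ** z ** eX.
Proof. exact: eme_stable. Qed.

Definition u (z : M) : kM M k := dl z - (if gX z then dl (eX ** z ** eX) else 0).

Lemma u_in z : z \in SYX -> u z \in KYX.
Proof.
move=> zS; rewrite KYXP; apply/andP; split.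
  rewrite rpredB ?delta_kS //; case: ifP => _; rewrite ?rpred0 //.
  by rewrite delta_kS ?rhoSYX.
rewrite /u linearB /= !rho_delta zS /=; case: ifP => gz; last by rewrite linear0 subrr.
by rewrite rho_delta rhoSYX //= gXrho gz rho_idem subrr.
Qed.

Lemma PL (v : kM M k) (a : A) : rho v = 0 -> \sum_(s in SYX) v s *: R a s = 0.
Proof.
move=> rv.
have E t : \sum_(s in SYX | gX s) v s * (t == eX ** s ** eX)%:R = 0.
  have := congr1 (fun f : kM M k => f t) rv; rewrite /rhoXlin sum_ffunE ffunE => h.
  by apply: (etrans _ h); apply: eq_bigr => s _; rewrite !ffunE.
rewrite (eq_bigr (fun s => if gX s then v s *: r (eX ** s ** eX) a else 0)); last first.
  by move=> s _; rewrite /ractM; case: ifP; rewrite ?scaler0.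
rewrite -big_mkcondr /=.
rewrite (eq_bigr (fun s => \sum_t (v s * (t == eX ** s ** eX)%:R) *: r t a)); last first.
  move=> s _; rewrite (bigD1 (eX ** s ** eX)) //= eqxx mulr1 big1 ?addr0 // => t ts.
  by rewrite (negbTE ts) mulr0 scale0r.
rewrite exchange_big /= big1 // => t _.
by rewrite -scaler_suml E scale0r.
Qed.

Lemma gX_l (m n : M) : gX (m ** n) -> gX m.
Proof. by rewrite !sigma_good // => /(good_split rect iX) []. Qed.
Lemma gX_r (m n : M) : gX (m ** n) -> gX n.
Proof. by rewrite !sigma_good // => /(good_split rect iX) []. Qed.
Lemma gX_M (m n : M) : gX m -> gX n -> gX (m ** n).
Proof. by rewrite !sigma_good // => gm gn; have [] := good_mul rect iX gm gn. Qed.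

Lemma gY_inG (g : M) : inG eY g -> gY g.
Proof.
move=> gG; have [eg ge _] := inGP iY gG.
by rewrite sigma_good // /good eg ge.
Qed.
Lemma gX_inG (h : M) : inG eX h -> gX h.
Proof.
move=> hG; have [eh he _] := inGP iX hG.
by rewrite sigma_good // /good eh he.
Qed.

Lemma Lg (g : M) (a : A) : inG eY g -> L g a = l g a.
Proof.
move=> gG; have [eg ge _] := inGP iY gG.
by rewrite /lactM gY_inG // eg ge.
Qed.
Lemma Rh (h : M) (a : A) : inG eX h -> R a h = r h a.
Proof.
move=> hG; have [eh he _] := inGP iX hG.
by rewrite /ractM gX_inG // eh he.
Qed.
Lemma L_N (m : M) (a : A) : L m (- a) = - L m a.
Proof. by rewrite /lactM; case: ifP; rewrite ?linearN ?oppr0. Qed.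
Lemma R_N (m : M) (a : A) : R (- a) m = - R a m.
Proof. by rewrite /ractM; case: ifP; rewrite ?linearN ?oppr0. Qed.

Lemma bimul_delta (g h z : M) : bimul g h (dl z) = dl (g ** z ** h).
Proof.
apply/ffunP => t; rewrite !ffunE big_mkcond (bigD1 z) //= big1 => [|s sz].
  rewrite ffunE eqxx addr0 eq_sym; by case: eqP.
by rewrite ffunE (negbTE sz); case: ifP.
Qed.

Lemma bimul_lin (g h : M) (c : k) (a b : kM M k) :
  bimul g h (c *: a + b) = c *: bimul g h a + bimul g h b.
Proof.
apply/ffunP => t; rewrite !ffunE scaler_sumr -big_split; apply: eq_bigr => s _.
by rewrite !ffunE.
Qed.

Lemma bimulB (g h : M) (a b : kM M k) : bimul g h (a - b) = bimul g h a - bimul g h b.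
Proof.
apply/ffunP => t; rewrite !ffunE -sumrB; apply: eq_bigr => s _.
by rewrite !ffunE.
Qed.
Lemma bimul0 (g h : M) : bimul g h (0 : kM M k) = 0.
Proof. by apply/ffunP => t; rewrite !ffunE big1 // => s _; rewrite ffunE. Qed.

Lemma lin_sum (V B : lmodType k) (F : V -> B) (I : finType) (P : pred I)
    (c : I -> k) (x : I -> V) :
  (forall a u w, F (a *: u + w) = a *: F u + F w) ->
  F (\sum_(i | P i) c i *: x i) = \sum_(i | P i) c i *: F (x i).
Proof.
move=> lin.
have F0 : F 0 = 0.
  have := lin 1 0 0; rewrite !scale1r addr0 => h.
  by apply: (addrI (F 0)); rewrite addr0 -h.
by elim/big_rec2: _ => // i y1 y2 _ <-; rewrite lin.
Qed.

Lemma vdecomp (v : kM M k) : v \in kS -> v = \sum_(s in SYX) v s *: dl s.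
Proof.
move=> vS; apply/ffunP => t; rewrite sum_ffunE.
case: (boolP (t \in SYX)) => tS.
  rewrite (bigD1 t) //= big1 => [|s /andP[_ st]].
    by rewrite !ffunE eqxx addr0; apply/esym; apply: mulr1.
  by rewrite !ffunE eq_sym (negbTE st) scaler0.
rewrite kS_supp // big1 // => s sS; rewrite !ffunE.
by case: eqP => [ts|]; [rewrite ts sS in tS | rewrite scaler0].
Qed.

Lemma SYX_mulL (g y : M) : inG eY g -> y \in SYX -> g ** y \in SYX.
Proof.
move=> gG yS; have [eg _ _] := inGP iY gG; have [_ ye _] := SYX_fix yS.
by rewrite SYX_char mA eg -mA ye.
Qed.
Lemma SYX_mulR (z h : M) : inG eX h -> z \in SYX -> z ** h \in SYX.
Proof.
move=> hG zS; have [_ he _] := inGP iX hG; have [ez _ _] := SYX_fix zS.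
by rewrite SYX_char mA ez -mA he.
Qed.

Section Deriv2.
Variable d : M -> A.
Hypothesis hd : derivation eX eY l r d.

Lemma T0 : T d 0 = 0.
Proof. by rewrite /T big1 // => s _; rewrite ffunE scale0r. Qed.

Lemma T_equiv (g h : M) (v : kM M k) : inG eY g -> inG eX h -> v \in KYX ->
  T d (bimul g h v) = l g (r h (T d v)).
Proof.
move=> gG hG; rewrite KYXP => /andP[vS /eqP rv].
rewrite {1}(vdecomp vS) (@lin_sum _ _ _ _ _ _ _ (bimul_lin g h)) (@lin_sum _ _ _ _ _ _ _ (T_lin d)).
rewrite (eq_bigr (fun s => v s *: l g (r h (d s)) + r h (v s *: R (d g) s))); last first.
  move=> s sS; rewrite bimul_delta T_delta SYX_mulR ?SYX_mulL //.
  rewrite -mA hd hd (L0 _ (SYX_ngY sS)) add0r RM Lg // Rh // scalerDr.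
  by rewrite Rh // linearZ.
rewrite big_split /= -linear_sum /= PL // linear0 addr0.
by rewrite /T !linear_sum; apply: eq_bigr => s _; rewrite !linearZ.
Qed.

Lemma T_inner (a : A) (v : kM M k) : (forall m, d m = L m a - R a m) -> v \in KYX -> T d v = 0.
Proof.
move=> da; rewrite KYXP => /andP[vS /eqP rv].
rewrite /T (eq_bigr (fun s => - (v s *: R a s))) => [|s sS]; last first.
  by rewrite da L0 ?SYX_ngY // sub0r scalerN.
by rewrite sumrN PL // oppr0.
Qed.

Lemma T_u (z : M) : z \in SYX -> T d (u z) = d z - (if gX z then d (eX ** z ** eX) else 0).
Proof.
move=> zS; rewrite /u T_B T_delta zS; case: ifP => _; last by rewrite T0.
by rewrite T_delta rhoSYX.
Qed.

Lemma d_kernel : (forall z, z \in SYX -> T d (u z) = 0) ->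
  forall m, d m = L m (- d eX) - R (- d eX) m.
Proof.
move=> H m.
set z := eY ** m ** eX.
have zS : z \in SYX := SYX_in m.
have dz : d z = R (d eX) z.
  have := H z zS; rewrite T_u //; move/eqP; rewrite subr_eq0 => /eqP ->.
  case: ifP => gz; last by rewrite R0 ?gz.
  rewrite -(mA eX z eX) hd L0; last by apply: notgY_X; apply: ideal_refl.
  by rewrite add0r (RM z eX) ReX.
have dz2 : d z = L m (d eX) + d m.
  by rewrite /z hd LM LeY (d_eYl hd) ReX.
have Rz : R (d eX) z = R (d eX) m by rewrite /z !RM ReY ReX.
rewrite L_N R_N opprK -Rz -dz dz2.
by rewrite addrA addNr add0r.
Qed.

End Deriv2.

Lemma gX_EE (x : M) : gX (eY ** x ** eX) = gX x.
Proof.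
apply/idP/idP => [/gX_l/gX_r //|gx].
exact: gX_M (gX_M gX_eY gx) gX_eX.
Qed.

Lemma rhoM2 (m n : M) : gX m -> gX n -> eX ** m ** n ** eX = eX ** m ** eX ** n ** eX.
Proof.
rewrite !sigma_good // => gm gn; have [E _] := good_mul rect iX gm gn.
by move: E; rewrite !mA (midl2 _ (eqP iX)).
Qed.

Section Surj.
Variable f : subvs_of KYX -> A.
Hypothesis hf : homV l r f.

Lemma f_lin c x y : f (c *: x + y) = c *: f x + f y.
Proof. by case: hf. Qed.
Lemma f0 : f 0 = 0.
Proof.
have := f_lin 1 0 0; rewrite !scale1r addr0 => h.
by apply: (addrI (f 0)); rewrite addr0 -h.
Qed.
Lemma fD x y : f (x + y) = f x + f y.
Proof. by have := f_lin 1 x y; rewrite !scale1r. Qed.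
Lemma fB x y : f (x - y) = f x - f y.
Proof. by have := f_lin (-1) y x; rewrite !scaleN1r addrC => ->; rewrite addrC. Qed.
Lemma fZ x : vsval x \in ZYX -> f x = 0.
Proof. by case: hf => _ H _; apply: H. Qed.
Lemma fE (g h : M) (v w : subvs_of KYX) : inG eY g -> inG eX h ->
  vsval w = bimul g h (vsval v) -> f w = l g (r h (f v)).
Proof. by case: hf => _ _ H; apply: H. Qed.

Definition U (z : M) : subvs_of KYX := vsproj KYX (u z).
Lemma UK z : z \in SYX -> vsval (U z) = u z.
Proof. by move=> zS; rewrite /U vsprojK // u_in. Qed.
Definition D (z : M) := f (U z).
Definition dd (m : M) := D (eY ** m ** eX).

Lemma usum (w : kM M k) : w \in KYX -> \sum_(s in SYX) w s *: u s = w.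
Proof.
rewrite KYXP => /andP[wS /eqP rw].
rewrite /u (eq_bigr (fun s => w s *: dl s - (if gX s then w s *: dl (eX ** s ** eX) else 0))); last first.
  by move=> s _; rewrite scalerBr; case: ifP; rewrite ?scaler0.
rewrite sumrB -(vdecomp wS) -big_mkcondr /=.
by have := rw; rewrite /rhoXlin => ->; rewrite subr0.
Qed.

Lemma Phi_f (v : subvs_of KYX) : T dd (vsval v) = f v.
Proof.
have vK := subvsP v.
rewrite /T (eq_bigr (fun s => vsval v s *: f (U s))); last first.
  by move=> s sS; rewrite /dd /D; have [_ _ ->] := SYX_fix sS.
rewrite -(@lin_sum _ _ _ _ _ _ _ f_lin); congr f; apply: subvs_inj.
rewrite linear_sum /= -{2}(usum vK); apply: eq_bigr => s sS.
by rewrite UK.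
Qed.

Lemma D_sim z z' : z \in SYX -> z' \in SYX -> sim eX eY z z' -> gX z = gX z' ->
  (gX z -> eX ** z ** eX = eX ** z' ** eX) -> D z = D z'.
Proof.
move=> zS z'S szz gzz rz; apply/eqP; rewrite -subr_eq0 -fB; apply/eqP; apply: fZ.
rewrite linearB /= !UK //.
have -> : u z - u z' = dl z - dl z'.
  rewrite /u -gzz; case: ifP => gz; last by rewrite !subr0.
  by rewrite rz // opprB addrA subrK.
apply: (subvP (addvSr _ _)); apply: memv_span; apply/mapP; exists (z, z') => //.
by rewrite mem_filter szz /=; apply: allpairs_f; rewrite mem_enum.
Qed.

Lemma D_NN z : NN eX eY z -> ~~ gX z -> D z = 0.
Proof.
move=> nz ngz; have zS : z \in SYX by case/andP: nz.
apply: fZ; rewrite UK // /u (negbTE ngz) subr0.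
apply: (subvP (addvSl _ _)); apply: memv_span; apply/mapP; exists z => //.
by rewrite mem_filter nz mem_enum.
Qed.

Lemma D_right z h : z \in SYX -> inG eX h -> D (z ** h) = r h (D z).
Proof.
move=> zS hG; rewrite /D (@fE eY h (U z) (U (z ** h)) (inG_e iY) hG); first by rewrite G2.
rewrite !UK ?SYX_mulR // /u bimulB bimul_delta.
have [ez _ _] := SYX_fix zS; rewrite mA ez.
have ghx : gX (z ** h) = gX z.
  by apply/idP/idP => [/gX_l //|gz]; apply: gX_M gz (gX_inG hG).
rewrite ghx; case: ifP => gz; last by rewrite bimul0.
rewrite bimul_delta; congr (_ - dl _).
have [eh he _] := inGP iX hG.
have gzz : good eX z by rewrite -sigma_good.
have ghh : good eX h by rewrite /good eh he.
have [E _] := good_mul rect iX gzz ghh.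
by rewrite -(mA eX z h) E eh he !mA YX.
Qed.

Lemma D_left g y : inG eY g -> y \in SYX ->
  D (g ** y) = l g (D y) + (if gX y then D (g ** (eX ** y ** eX)) else 0).
Proof.
move=> gG yS.
have gXg : gX g := gY_gX (gY_inG gG).
have [eg ge _] := inGP iY gG.
have [_ ye _] := SYX_fix yS.
have gyS : g ** y \in SYX := SYX_mulL gG yS.
have gryS : g ** (eX ** y ** eX) \in SYX := SYX_mulL gG (rhoSYX yS).
have E : u (g ** y) = bimul g eX (u y) + (if gX y then u (g ** (eX ** y ** eX)) else 0).
  rewrite /u bimulB !bimul_delta -(mA g y eX) ye.
  have gxy : gX (g ** y) = gX y.
    by apply/idP/idP => [/gX_r //|gy]; apply: gX_M.
  rewrite gxy; case: ifP => gy; last by rewrite bimul0 !addr0.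
  have rr : eX ** y ** eX ** eX = eX ** y ** eX by rewrite -mA (eqP iX).
  rewrite bimul_delta -(mA g (eX ** y ** eX) eX) rr.
  have -> : gX (g ** (eX ** y ** eX)) by apply: gX_M => //; rewrite gXrho.
  have -> : eX ** (g ** (eX ** y ** eX)) ** eX = eX ** (g ** y) ** eX.
    have gg : good eX g by rewrite -sigma_good.
    have gyy : good eX y by rewrite -sigma_good.
    have gry : good eX (eX ** y ** eX) by rewrite -sigma_good // gXrho.
    have [E1 _] := good_mul rect iX gg gry; have [E2 _] := good_mul rect iX gg gyy.
    by rewrite E1 E2 rho_idem.
  by rewrite addrA subrK.
have WK : bimul g eX (u y) \in KYX.
  have -> : bimul g eX (u y) = u (g ** y) - (if gX y then u (g ** (eX ** y ** eX)) else 0).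
    by rewrite E addrK.
  by rewrite rpredB ?u_in //; case: ifP; rewrite ?rpred0 ?u_in.
have UE : U (g ** y) = vsproj KYX (bimul g eX (u y)) + (if gX y then U (g ** (eX ** y ** eX)) else 0).
  apply: subvs_inj; rewrite linearD /= UK // vsprojK // E; congr (_ + _).
  by case: ifP; rewrite ?linear0 ?UK.
rewrite /D UE fD (@fE g eX (U y)) //; last by rewrite vsprojK // UK.
rewrite G4; first by congr (_ + _); case: ifP; rewrite ?f0.
exact: inG_e.
Qed.

Lemma rel1 m n : D (eY ** (m ** n) ** eX) = D (eY ** m ** eY ** n ** eX).
Proof.
have -> : eY ** m ** eY ** n ** eX = eY ** (m ** eY ** n) ** eX by rewrite !mA.
apply: D_sim; rewrite ?SYX_in //.
- apply/and3P; split; rewrite ?SYX_in //; apply: connect1; apply/orP; left.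
  apply/orP; left; apply/existsP; exists m; apply/existsP; exists n.
  by rewrite eqxx /= !mA eqxx.
- rewrite gX_EE gX_EE; apply/idP/idP => gmn.
    by apply: gX_M (gX_M (gX_l gmn) gX_eY) (gX_r gmn).
  by apply: gX_M (gX_l (gX_l gmn)) (gX_r gmn).
- rewrite gX_EE => gmn; have gm := gX_l gmn; have gn := gX_r gmn.
  rewrite !mA XY (midl2 _ (eqP iX)) (rhoM2 gm gn).
  rewrite (midl2 _ (eqP iX)) -(mA eX m eY) (rhoM2 (gX_M gm gX_eY) gn).
  by rewrite !mA (midl2 _ YX).
Qed.

Lemma rel2 m n : ~~ gY m -> D (eY ** (m ** n) ** eX) = D (eY ** m ** eX ** n ** eX).
Proof.
move=> gm.
have -> : eY ** m ** eX ** n ** eX = eY ** (m ** eX ** n) ** eX by rewrite !mA.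
apply: D_sim; rewrite ?SYX_in //.
- apply/and3P; split; rewrite ?SYX_in //; apply: connect1; apply/orP; left.
  apply/orP; left; apply/existsP; exists m; apply/existsP; exists n.
  by rewrite eqxx /= gm !mA eqxx orbT.
- rewrite gX_EE gX_EE; apply/idP/idP => gmn.
    by apply: gX_M (gX_M (gX_l gmn) gX_eX) (gX_r gmn).
  by apply: gX_M (gX_l (gX_l gmn)) (gX_r gmn).
- rewrite gX_EE => gmn; have gm' := gX_l gmn; have gn := gX_r gmn.
  rewrite !mA XY (midl2 _ (eqP iX)) (rhoM2 gm' gn).
  by rewrite (midl2 _ (eqP iX)).
Qed.

Lemma relNN m n : ~~ gY m -> ~~ gX n -> D (eY ** (m ** n) ** eX) = 0.
Proof.
move=> gm gn; rewrite rel2 //.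
have -> : eY ** m ** eX ** n ** eX = eY ** ((eY ** m) ** (eX ** n ** eX)) ** eX.
  by rewrite !mA (eqP iY) (midl2 _ (eqP iX)).
rewrite rel1; apply: D_NN.
  apply/andP; split.
    have -> : eY ** (eY ** m) ** eY ** (eX ** n ** eX) ** eX = eY ** (eY ** m ** eY ** (eX ** n ** eX)) ** eX by rewrite !mA.
    exact: SYX_in.
  apply/existsP; exists (eY ** m ** eY); apply/existsP; exists (eX ** n ** eX).
  apply/and3P; split.
  - rewrite inE; apply/negP => sub; move/negP: gm; apply.
    rewrite sigma_good //; apply: inG_of iY (eme_stable _ iY) _.
    exact: (subsetP sub _ (ideal_refl eY)).
  - rewrite inE; apply/negP => sub; move/negP: gn; apply.
    rewrite sigma_good //; apply: inG_of iX (eme_stable _ iX) _.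
    exact: (subsetP sub _ (ideal_refl eX)).
  - by rewrite !mA (eqP iY) (midl2 _ (eqP iX)).
by apply/negP => /gX_l/gX_r/gX_l/gX_r; apply/negP.
Qed.

Lemma dd_der : derivation eX eY l r dd.
Proof.
move=> m n; rewrite /dd.
case: (boolP (gY m)) => gm.
  have gG : good eY m by rewrite -sigma_good.
  rewrite /lactM gm rel1.
  have -> : eY ** m ** eY ** n ** eX = (eY ** m ** eY) ** (eY ** n ** eX).
    by rewrite !mA (midl2 _ (eqP iY)).
  rewrite D_left ?SYX_in //.
  case: (boolP (gX n)) => gn.
    have gy : gX (eY ** n ** eX) by rewrite gX_EE.
    rewrite gy /ractM gn.
    have -> : eY ** m ** eY ** (eX ** (eY ** n ** eX) ** eX) = (eY ** m ** eX) ** (eX ** n ** eX).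
      by rewrite !mA (midl2 _ YX) (midl2 _ XY) !(midl2 _ (eqP iX)).
    rewrite (@D_right (eY ** m ** eX) (eX ** n ** eX)) ?SYX_in //; move: gn; rewrite sigma_good // => gg; exact: gg.
  have gy : ~~ gX (eY ** n ** eX) by rewrite gX_EE.
  by rewrite (negbTE gy) R0 // !addr0.
rewrite L0 // add0r.
case: (boolP (gX n)) => gn.
  rewrite rel2 // /ractM gn.
  have -> : eY ** m ** eX ** n ** eX = (eY ** m ** eX) ** (eX ** n ** eX).
    by rewrite !mA (midl2 _ (eqP iX)).
  rewrite (@D_right (eY ** m ** eX) (eX ** n ** eX)) ?SYX_in //; move: gn; rewrite sigma_good // => gg; exact: gg.
by rewrite relNN // R0.
Qed.

End Surj.

Lemma main_sec : exists Phi : (M -> A) -> (subvs_of KYX -> A),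
    [/\ forall (c : k) (d1 d2 : M -> A),
          derivation eX eY l r d1 -> derivation eX eY l r d2 ->
          Phi (fun m => c *: d1 m + d2 m) =1 (fun v => c *: Phi d1 v + Phi d2 v),
        forall d, derivation eX eY l r d -> homV l r (Phi d),
        forall f, homV l r f -> exists d, derivation eX eY l r d /\ Phi d =1 f &
        forall d, derivation eX eY l r d ->
          (Phi d =1 (fun _ => 0) <-> inner_derivation eX eY l r d)].
Proof.
exists (fun d v => T d (vsval v)); split.
- move=> c d1 d2 _ _ v; rewrite /T scaler_sumr -big_split; apply: eq_bigr => s _.
  by rewrite scalerDr !scalerA mulrC.
- move=> d hd; split.
  + by move=> c x y; rewrite linearP T_lin.
  + by move=> v vZ; apply: T_Z.
  + move=> g h v w gG hG ->; apply: T_equiv => //; exact: subvsP.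
- move=> f hf; exists (dd f); split; first exact: dd_der.
  exact: Phi_f.
- move=> d hd; split.
    move=> H; exists (- d eX); apply: d_kernel => // z zS.
    by have := H (vsproj KYX (u z)); rewrite vsprojK // u_in.
  case=> a da v; apply: T_inner da _; exact: subvsP.
Qed.

End Main.

Unset Implicit Arguments.

Theorem mainTheorem16 (M : finMonoid) (k : fieldType) (eX eY : M)
  (A : lmodType k) (l r : M -> {linear A -> A}) :
  rectangular M ->
  splitting_field_for_max_subgroups M k ->
  idem eX -> idem eY -> idem_lt eX eY ->
  ideal eX \proper ideal eY ->
  GG_module eX eY l r ->
  exists Phi : (M -> A) -> (subvs_of (KYX k eX eY) -> A),
    [/\ forall (c : k) (d1 d2 : M -> A),
          derivation eX eY l r d1 -> derivation eX eY l r d2 ->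
          Phi (fun m => c *: d1 m + d2 m) =1 (fun v => c *: Phi d1 v + Phi d2 v),
        forall d, derivation eX eY l r d -> homV l r (Phi d),
        forall f, homV l r f -> exists d, derivation eX eY l r d /\ Phi d =1 f &
        forall d, derivation eX eY l r d ->
          (Phi d =1 (fun _ => 0) <-> inner_derivation eX eY l r d)].
Proof.
move=> rect _ iX iY hlt hpr GG.
exact: (main_sec rect iX iY hlt hpr GG).
Qed.
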